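(* Let $A,B,C$ be agents and $\alpha,\beta,\gamma,\delta\ge0$, $\zeta\in(0,1]$. Use the following notation for interactive processes: $B_C^{\mathrm{dist}}$ is $B$ prompted to act as $C$ and then given the distinguisher prompt with respect to $C$; $C^{\mathrm{dist}}$ is $C$ given the distinguisher prompt; $A_{C}$ is $A$ given the actor prompt to imitate $C$; $B_C$ is $B$ given the actor prompt to imitate $C$; $A_{B,C}$ is $A$ given the actor prompt to imitate $B$ and then receiving (as its first incoming message) the actor prompt to imitate $C$. For a distinguisher process $\Pi$ and interlocutor $Y$ write $\Pr[\Pi\to b\mid Y]$ for the probability that $\Pi$, interacting with $Y$, finally outputs the bit $b$. Assume: (1) $A\geq_\alpha B$ and $B\geq_\beta C$ (GTT comparator). (2) ($\zeta$-Turing-recursivity of $B$ w.r.t. $C$.) In $\mathrm{GTT}(A,B)$ there is an event $R$, independent of the identity of the unknown agent, with $\Pr[R]\ge\zeta$, such that conditioned on $R$ the distinguisher $B$ sends the actor prompt for imitating $C$ and thereafter behaves exactly as $B_C^{\mathrm{dist}}$; thus conditioned on $R$, its output has the law of $B_C^{\mathrm{dist}}$ interacting with $A_{B,C}$ if the unknown agent is $A$, and with $B_C$ if the unknown agent is $B$. (3) (Better than random.) Conditioned on the complement of $R$, $B$ succeeds in $\mathrm{GTT}(A,B)$ with probability at least $1/2$. (4) ($B\geq^{\mathrm{dist,stat}}_\gamma C$, in interactive form.) For every interlocutor $Y$ and $b\in\{0,1\}$, $\bigl|\Pr[B_C^{\mathrm{dist}}\to b\mid Y]-\Pr[C^{\mathrm{dist}}\to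 b\mid Y]\bigr|\le\gamma$. (5) ($A$ is a reasonably intelligent imitator of $C$.) $\Pr[C^{\mathrm{dist}}\to 0\mid A_C]\le \Pr[C^{\mathrm{dist}}\to 0\mid A_{B,C}]+\delta$. Then $A\geq_\epsilon C$ with $\epsilon=\alpha/\zeta+\beta+\gamma+\delta$.
   Context: GTT $\mathrm{GTT}(X,Y)$: a fresh $Y$ is the distinguisher (given the distinguisher prompt asking whether its interlocutor is a $Y$) and interacts with an unknown agent which with probability $1/2$ is a fresh $Y$ and with probability $1/2$ is a fresh $X$ given the actor prompt to imitate $Y$; the distinguisher outputs $1$ (''same as me'') or $0$ and succeeds if correct. $p(X,Y)=\Pr[Y\text{ succeeds}]$, and the comparator $X\ge_\epsilon Y$ means $p(X,Y)\le\frac12+\epsilon$. In particular $p(A,C)=\frac12\Pr[C^{\mathrm{dist}}\to0\mid A_C]+\frac12\Pr[C^{\mathrm{dist}}\to1\mid C]$, where $C$ as interlocutor means a fresh instance of $C$ (equivalently $C$ imitating itself), and $p(B,C)=\frac12\Pr[C^{\mathrm{dist}}\to0\mid B_C]+\frac12\Pr[C^{\mathrm{dist}}\to1\mid C]$. *)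

(* Defs.v *)
From Stdlib Require Import Reals Lra.
Open Scope R_scope.

(* An abstract model of agents and interactive processes.
   Outputs of distinguishers are bits: true = 1 ("same as me"), false = 0. *)
Record InteractionModel := {
  Agent : Type;
  Proc : Type;
  (* fresh instance of an agent (= the agent imitating itself) *)
  fresh : Agent -> Proc;
  (* distP Y = Y^dist : Y given the distinguisher prompt w.r.t. Y *)
  distP : Agent -> Proc;
  (* actor X Y = X_Y : X given the actor prompt to imitate Y *)
  actor : Agent -> Agent -> Proc;
  (* actor2 X Y Z = X_{Y,Z} : X prompted to imitate Y, then receiving as
     first incoming message the actor prompt to imitate Z *)
  actor2 : Agent -> Agent -> Agent -> Proc;
  (* actdist B C = B_C^dist : B prompted to act as C, then given the
     distinguisher prompt with respect to C *)
  actdist : Agent -> Agent -> Proc;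
  (* Pr Pi Y b = Pr[Pi -> b | Y] *)
  Pr : Proc -> Proc -> bool -> R;
  Pr_nonneg : forall Pi Y b, 0 <= Pr Pi Y b;
  Pr_sum : forall Pi Y, Pr Pi Y false + Pr Pi Y true = 1
}.

Arguments fresh {i}.
Arguments distP {i}.
Arguments actor {i}.
Arguments actor2 {i}.
Arguments actdist {i}.
Arguments Pr {i}.

(* p(X,Y) = success probability of the distinguisher Y in GTT(X,Y). *)
Definition gtt_p (M : InteractionModel) (X Y : Agent M) : R :=
  / 2 * Pr (distP Y) (actor X Y) false + / 2 * Pr (distP Y) (fresh Y) true.

Definition gtt_ge (M : InteractionModel) (eps : R) (X Y : Agent M) : Prop :=
  gtt_p M X Y <= / 2 + eps.

(* Main.v *)
Require Import Defs.
From Stdlib Require Import Reals Lra.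
Open Scope R_scope.

Theorem mainTheorem4 (M : InteractionModel) (A B C : Agent M)
  (alpha beta gamma delta zeta : R)
  (halpha : 0 <= alpha) (hbeta : 0 <= beta) (hgamma : 0 <= gamma)
  (hdelta : 0 <= delta) (hzeta : 0 < zeta <= 1)
  (* (1) *)
  (h1AB : gtt_ge M alpha A B) (h1BC : gtt_ge M beta B C)
  (* (2)+(3): decomposition of GTT(A,B) along the event R, with Pr[R] = r,
     R independent of the identity of the unknown agent, and success
     probability q >= 1/2 conditioned on the complement of R *)
  (h23 : exists r q : R, zeta <= r <= 1 /\ / 2 <= q <= 1 /\
     gtt_p M A B =
       r * (/ 2 * Pr (actdist B C) (actor2 A B C) false
            + / 2 * Pr (actdist B C) (actor B C) true)
       + (1 - r) * q)
  (* (4) *)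
  (h4 : forall (Y : Proc M) (b : bool),
     Rabs (Pr (actdist B C) Y b - Pr (distP C) Y b) <= gamma)
  (* (5) *)
  (h5 : Pr (distP C) (actor A C) false
        <= Pr (distP C) (actor2 A B C) false + delta) :
  gtt_ge M (alpha / zeta + beta + gamma + delta) A C.
Proof.
  destruct h23 as [r [q [[hr1 hr2] [[hq1 hq2] hp]]]].
  unfold gtt_ge, gtt_p in *.
  set (X := / 2 * Pr (actdist B C) (actor2 A B C) false
            + / 2 * Pr (actdist B C) (actor B C) true) in hp.
  assert (hrX : r * (X - / 2) <= alpha).
  { assert ((1 - r) * q >= (1 - r) * / 2) by (apply Rle_ge, Rmult_le_compat_l; lra).
    unfold gtt_p in h1AB. lra. }
  assert (hX : X - / 2 <= alpha / zeta).
  { destruct (Rle_dec (X - / 2) 0) as [Hn|Hp].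
    - assert (0 <= alpha / zeta) by (unfold Rdiv; apply Rmult_le_pos; [lra | apply Rlt_le, Rinv_0_lt_compat; lra]). lra.
    - apply Rmult_le_reg_l with zeta; [lra|].
      replace (zeta * (alpha / zeta)) with alpha by (field; lra).
      assert (zeta * (X - /2) <= r * (X - /2)) by (apply Rmult_le_compat_r; lra).
      lra. }
  pose proof (h4 (actor2 A B C) false) as g1.
  pose proof (h4 (actor B C) true) as g2.
  pose proof (Rle_abs (- (Pr (actdist B C) (actor2 A B C) false - Pr (distP C) (actor2 A B C) false))).
  pose proof (Rle_abs (- (Pr (actdist B C) (actor B C) true - Pr (distP C) (actor B C) true))).
  rewrite Rabs_Ropp in H, H0.
  pose proof (Pr_sum M (distP C) (actor B C)) as s1.
  unfold X in hX. lra.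
Qed.
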